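(* For $n\ge 2$, the number of shallow Grassmannian permutations in $S_n$ (shallow permutations with at most one descent) equals $\binom{n+1}{3}+1$.
   Context: For $\pi\in S_n$: $D(\pi)=\sum_{i}|\pi_i-i|$, $I(\pi)$ is the number of inversions, $T(\pi)=n-\mathrm{cyc}(\pi)$ with $\mathrm{cyc}$ the number of cycles in the disjoint cycle decomposition; $\pi$ is shallow if $I(\pi)+T(\pi)=D(\pi)$. A descent of $\pi$ is an index $i\in[n-1]$ with $\pi_i>\pi_{i+1}$; a permutation is Grassmannian if it has at most one descent. *)

(* Defs.v *)
From mathcomp Require Import all_boot all_order all_fingroup.
Set Implicit Arguments. Unset Strict Implicit. Unset Printing Implicit Defensive.

(* Permutations of [n] are modelled as 'S_n = {perm 'I_n}, i.e. on {0,..,n-1}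
   (a shift by one of [n] = {1,..,n}; all statistics below are shift-invariant). *)

Definition Dstat n (s : 'S_n) : nat :=
  \sum_(i < n) (maxn (s i) i - minn (s i) i).

Definition Istat n (s : 'S_n) : nat :=
  #|[set p : 'I_n * 'I_n | (p.1 < p.2) && (s p.2 < s p.1)]|.

(* cyc(pi) = number of cycles in the disjoint cycle decomposition
   (fixed points count as cycles of length 1) *)
Definition cyc n (s : 'S_n) : nat := #|porbits s|.

Definition Tstat n (s : 'S_n) : nat := n - cyc s.

Definition shallow n (s : 'S_n) : bool := Istat s + Tstat s == Dstat s.

Definition descents n (s : 'S_n) : {set 'I_n} :=
  [set i : 'I_n | [exists j : 'I_n, (val j == (val i).+1) && (s j < s i)]].

Definition grassmannian n (s : 'S_n) : bool := #|descents s| <= 1.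

(* Main.v *)
Require Import Defs.
From mathcomp Require Import all_boot all_order all_fingroup zify.
Set Implicit Arguments. Unset Strict Implicit. Unset Printing Implicit Defensive.

Lemma card_set_sum (T : finType) (Q : pred T) :
  #|[set j : T | Q j]| = \sum_(j : T) (Q j : nat).
Proof.
rewrite -sum1_card big_mkcond /=; apply: eq_bigr => j _; rewrite inE.
by case: (Q j).
Qed.

Lemma card_lt_ord n b : b <= n -> #|[set i : 'I_n | i < b]| = b.
Proof.
move=> hb; rewrite card_set_sum.
rewrite -(big_mkord xpredT (fun i => (i < b : nat))).
rewrite (big_cat_nat (n:=b)) //=.
rewrite (eq_big_nat _ _ (F2 := fun _ => 1)); last by move=> i /andP[_ ->].
rewrite [X in _ + X](eq_big_nat _ _ (F2 := fun _ => 0)); last first.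
  by move=> i /andP[h _]; rewrite ltnNge h.
by rewrite !sum_nat_const_nat; lia.
Qed.

Section Stats.
Variable n : nat.
Variable s : 'S_n.
Definition Rs (i : 'I_n) := #|[set j : 'I_n | (i < j) && (s j < s i)]|.
Definition Ls (i : 'I_n) := #|[set j : 'I_n | (j < i) && (s i < s j)]|.

Lemma key i : s i + Ls i = i + Rs i.
Proof.
have h1 : #|[set j : 'I_n | s j < s i]| = s i.
  apply: etrans (card_lt_ord (ltnW (ltn_ord (s i)))).
  have -> : [set j : 'I_n | s j < s i] = s @^-1: [set v : 'I_n | v < s i].
    by apply/setP => j; rewrite !inE.
  by rewrite card_preimset //; apply: perm_inj.
have h2 : #|[set j : 'I_n | j < i]| = i by rewrite card_lt_ord // ltnW.
have c1 := cardsID [set j : 'I_n | j < i] [set j : 'I_n | s j < s i].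
have c2 := cardsID [set j : 'I_n | s j < s i] [set j : 'I_n | j < i].
have e1 : [set j : 'I_n | s j < s i] :\: [set j : 'I_n | j < i] = [set j : 'I_n | (i < j) && (s j < s i)].
  apply/setP => j; rewrite !inE.
  case: (ltngtP j i) => hj; rewrite ?andbF ?andbT //=.
  by rewrite (val_inj hj) ltnn.
have e2 : [set j : 'I_n | j < i] :\: [set j : 'I_n | s j < s i] = [set j : 'I_n | (j < i) && (s i < s j)].
  apply/setP => j; rewrite !inE andbC.
  case: (ltngtP (s i) (s j)) => hj; rewrite ?andbF ?andbT //=.
  by rewrite (perm_inj (val_inj hj)) ltnn.
rewrite e1 in c1; rewrite e2 setIC in c2; rewrite /Ls /Rs.
lia.
Qed.

Lemma I_sumR : Istat s = \sum_i Rs i.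
Proof.
rewrite /Istat card_set_sum /Rs.
rewrite -(pair_big xpredT xpredT (fun i j : 'I_n => ((i < j) && (s j < s i) : nat))) /=.
by apply: eq_bigr => i _; rewrite card_set_sum.
Qed.

Lemma I_sumL : Istat s = \sum_i Ls i.
Proof.
rewrite I_sumR /Rs /Ls.
under eq_bigr do rewrite card_set_sum.
rewrite exchange_big /=; apply: eq_bigr => i _; rewrite card_set_sum.
by apply: eq_bigr.
Qed.

Definition blocks k := (forall i j : 'I_n, i < j -> j < k -> s i < s j) /\
  (forall i j : 'I_n, i < j -> k <= i -> s i < s j).

Lemma blocksL k (i : 'I_n) : blocks k -> i < k -> Ls i = 0.
Proof.
move=> [h _] hi; apply/eqP; rewrite cards_eq0; apply/eqP/setP => j; rewrite !inE.
apply/negbTE; apply/negP => /andP[a b].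
by have := h j i a hi; lia.
Qed.

Lemma blocksR k (i : 'I_n) : blocks k -> k <= i -> Rs i = 0.
Proof.
move=> [_ h] hi; apply/eqP; rewrite cards_eq0; apply/eqP/setP => j; rewrite !inE.
apply/negbTE; apply/negP => /andP[a b].
by have := h i j a hi; lia.
Qed.

Lemma D_blocks k : blocks k -> Dstat s = 2 * Istat s.
Proof.
move=> hb; rewrite /Dstat.
rewrite (eq_bigr (fun i => Rs i + Ls i)); last first.
  move=> i _; have := key i; case: (ltnP i k) => hik.
    by rewrite (blocksL hb hik); lia.
  by rewrite (blocksR hb hik); lia.
by rewrite big_split /= -I_sumR -I_sumL; lia.
Qed.
End Stats.

Section Desc.
Variable n : nat.
Variable s : 'S_n.

Lemma notdesc (p q : 'I_n) : p \notin descents s -> (q : nat) = p.+1 -> s p < s q.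
Proof.
move=> hp hq; rewrite ltn_neqAle; apply/andP; split.
  apply/negP => /eqP/val_inj/perm_inj h; move: hq; rewrite h; lia.
rewrite leqNgt; apply/negP => h; move/negP: hp; apply; rewrite inE.
by apply/existsP; exists q; rewrite h andbT; apply/eqP; exact: hq.
Qed.

Lemma incr (i j : 'I_n) : i < j ->
  (forall p : 'I_n, i <= p < j -> p \notin descents s) -> s i < s j.
Proof.
move=> hij hd.
have main : forall m (j : 'I_n), (j : nat) = i + m.+1 ->
    (forall p : 'I_n, i <= p < j -> p \notin descents s) -> s i < s j.
  elim => [|m IH] j0 hj0 hd0.
    by apply: notdesc; [apply: hd0; lia | lia].
  have hlt : i + m.+1 < n by have := ltn_ord j0; lia.
  pose j1 := Ordinal hlt.
  have h1 : s i < s j1 by apply: IH => // p hp; apply: hd0; rewrite /= in hp; lia.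
  have h2 : s j1 < s j0 by apply: notdesc; [apply: hd0; rewrite /=; lia| rewrite /=; lia].
  lia.
have := main (j - i).-1 j; apply; [lia | exact hd].
Qed.

Lemma blocks_desc d : (forall p : 'I_n, p \in descents s -> (p : nat) = d) -> blocks s d.+1.
Proof.
move=> hd; split => i j hij hk; apply: incr => // p hp; apply/negP => /hd; lia.
Qed.

Lemma blocks_nodesc : descents s = set0 -> blocks s 0.
Proof.
move=> h; split => i j hij hk; first by [].
by apply: incr => // p _; rewrite h inE.
Qed.
End Desc.

Lemma blocks_uniq n (s1 s2 : 'S_n) k : blocks s1 k -> blocks s2 k ->
  (forall i : 'I_n, i < k -> s1 i = s2 i) -> s1 = s2.
Proof.
move=> [_ b1] [_ b2] he; apply/permP => j.
have main : forall m (j : 'I_n), (j : nat) = m -> s1 j = s2 j.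
  elim/ltn_ind => m IH j0 hj0.
  case: (ltnP j0 k) => hk; first exact: he.
  case: (ltngtP (s1 j0) (s2 j0)) => hc; last exact: val_inj.
  - pose j' := (s2^-1)%g (s1 j0).
    have hj' : s2 j' = s1 j0 by rewrite /j' permKV.
    case: (ltngtP j' j0) => hh.
    + have := IH j' ltac:(lia) j' erefl; rewrite hj' => /perm_inj e.
      by move: hh; rewrite e ltnn.
    + have := b2 j0 j' hh hk; rewrite hj'; lia.
    + by move: hj'; rewrite (val_inj hh) => e; move: hc; rewrite e ltnn.
  - pose j' := (s1^-1)%g (s2 j0).
    have hj' : s1 j' = s2 j0 by rewrite /j' permKV.
    case: (ltngtP j' j0) => hh.
    + have := IH j' ltac:(lia) j' erefl; rewrite hj' => /perm_inj e.
      by move: hh; rewrite -e ltnn.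
    + have := b1 j0 j' hh hk; rewrite hj'; lia.
    + by move: hj'; rewrite (val_inj hh) => e; move: hc; rewrite e ltnn.
exact: main.
Qed.

Section Cyc.
Variable T : finType.
Variable s : {perm T}.

Lemma porbit_fix x : s x = x -> porbit s x = [set x].
Proof.
move=> h; apply/setP => y; rewrite inE; apply/idP/eqP => [/porbitP [i ->]|->].
  by elim: i => [|i IH]; rewrite ?expg0 ?perm1 // expgSr permM IH h.
exact: porbit_id.
Qed.

Let F := [set x | s x == x].

Lemma cyc_lower0 : #|F| <= #|porbits s|.
Proof.
rewrite -(card_imset F set1_inj); apply: subset_leq_card; apply/subsetP => X.
move/imsetP => [x]; rewrite inE => /eqP hx ->; rewrite -porbit_fix //.
exact: imset_f.
Qed.

Lemma cyc_lower u : s u != u -> #|F|.+1 <= #|porbits s|.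
Proof.
move=> hu.
have hn : porbit s u \notin set1 @: F.
  apply/imsetP => [[x _ hx]].
  have h1 : u \in porbit s u by exact: porbit_id.
  have h2 : s u \in porbit s u by rewrite -{1}(expg1 s) mem_porbit.
  rewrite hx !inE in h1 h2; move/negP: hu; apply; by rewrite (eqP h2) (eqP h1).
have sub : porbit s u |: (set1 @: F) \subset porbits s.
  apply/subsetP => X; rewrite in_setU1 => /orP[/eqP ->|].
    exact: imset_f.
  move/imsetP => [x]; rewrite inE => /eqP hx ->; rewrite -porbit_fix //.
  exact: imset_f.
by have := subset_leq_card sub; rewrite cardsU1 hn (card_imset F set1_inj) add1n.
Qed.

Lemma cyc_upper u : (forall j, s j != j -> porbit s j = porbit s u) ->
  #|porbits s| <= #|F|.+1.
Proof.
move=> h.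
have sub : porbits s \subset porbit s u |: (set1 @: F).
  apply/subsetP => X /imsetP [x _ ->]; rewrite in_setU1.
  case: (eqVneq (s x) x) => hx.
    by rewrite porbit_fix // imset_f ?orbT // inE hx.
  by rewrite h // eqxx.
apply: leq_trans (subset_leq_card sub) _.
rewrite cardsU1 (card_imset F set1_inj); case: (_ \notin _) => //; lia.
Qed.
End Cyc.

Definition gf x y z i := if i < x then i else if i.+1 < y then i.+1
  else if i.+1 == y then z.-1 else if i == y then x else if i < z then i.-1 else i.
Definition valid n x y z := [&& x < y, y < z & z <= n].
Definition gv n x y z i := if valid n x y z then gf x y z i else i.
Definition hinv x y z v := if v < x then v else if v == x then y else
  if v < y then v.-1 else if v < z.-1 then v.+1 else if v == z.-1 then y.-1 else v.

Ltac ifs := repeat (case: ifP => /=; let H := fresh "H" in move=> H;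
   try (move/negbT: H => H)).

Lemma gv_lt n x y z i : i < n -> gv n x y z i < n.
Proof. rewrite /gv /valid; ifs; rewrite /gf; ifs; lia. Qed.

Lemma hinvK x y z i : x < y -> y < z -> hinv x y z (gf x y z i) = i.
Proof. rewrite /gf; ifs; rewrite /hinv; ifs; lia. Qed.

Lemma sum_ind a b n c : a <= b -> b <= n ->
  \sum_(0 <= i < n) (if a <= i < b then c else 0) = (b - a) * c.
Proof.
move=> hab hbn.
rewrite (big_cat_nat (n:=a)) //=; last lia.
rewrite (big_cat_nat (n:=b) (m:=a)) //=.
rewrite (eq_big_nat _ _ (F2 := fun _ => 0) (m:=0) (n:=a)); last first.
  by move=> i hi; ifs; lia.
rewrite (eq_big_nat _ _ (F2 := fun _ => c) (m:=a) (n:=b)); last first.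
  by move=> i hi; ifs; lia.
rewrite (eq_big_nat _ _ (F2 := fun _ => 0) (m:=b) (n:=n)); last first.
  by move=> i hi; ifs; lia.
rewrite !sum_nat_const_nat; lia.
Qed.

Lemma card_interval n a b : a <= b -> b <= n ->
  #|[set i : 'I_n | a <= i < b]| = b - a.
Proof.
move=> hab hbn; rewrite card_set_sum.
rewrite -(big_mkord xpredT (fun i => ((a <= i < b) : nat))).
rewrite -[b - a]muln1 -(sum_ind 1 hab hbn); apply: eq_big_nat => i _; by case: (a <= i < b).
Qed.

Definition famf n x y z (i : 'I_n) : 'I_n := Ordinal (gv_lt x y z (ltn_ord i)).

Lemma famf_inj n x y z : injective (@famf n x y z).
Proof.
move=> i j /(congr1 val) /=; rewrite /gv; case: ifP => hv.
  move/(congr1 (hinv x y z)); move/and3P: hv => [h1 h2 _].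
  by rewrite !hinvK // => h; apply: val_inj.
by move=> h; apply: val_inj.
Qed.

Definition fam n x y z : 'S_n := perm (@famf_inj n x y z).

Section Fam.
Variables n x y z : nat.
Hypothesis hxy : x < y.
Hypothesis hyz : y < z.
Hypothesis hzn : z <= n.
Let s := fam n x y z.

Lemma famE (i : 'I_n) : (s i : nat) = gf x y z i.
Proof. by rewrite /s /fam permE /= /gv /valid hxy hyz hzn. Qed.

Lemma fam_desc (p : 'I_n) : p \in descents s -> (p : nat) = y.-1.
Proof.
rewrite inE => /existsP [q /andP [/eqP hq]]; rewrite !famE hq.
rewrite /gf; ifs; lia.
Qed.

Lemma fam_blocks : blocks s y.
Proof.
have := blocks_desc fam_desc; rewrite prednK //; lia.
Qed.

Lemma fam_grass : grassmannian s.
Proof.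
rewrite /grassmannian.
have hy : y.-1 < n by lia.
apply: leq_trans (_ : #|[set Ordinal hy]| <= 1); last by rewrite cards1.
apply: subset_leq_card; apply/subsetP => p hp; rewrite inE; apply/eqP/val_inj.
exact: fam_desc.
Qed.

Lemma fam_fixed (i : 'I_n) : (s i == i) = ~~ (x <= i < z).
Proof. rewrite -(inj_eq val_inj) /= famE /gf; ifs; apply/idP/idP => h; first [by move/eqP: h; lia | by apply/eqP; lia]. Qed.

Lemma porbit_step (a b : 'I_n) : (s a : nat) = b -> porbit s a = porbit s b.
Proof.
move=> h; have e : s a = b by apply: val_inj.
by rewrite -e -(porbit_perm s 1 a) expg1.
Qed.

Lemma fam_orbits (u : 'I_n) : (u : nat) = x ->
  forall j : 'I_n, s j != j -> porbit s j = porbit s u.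
Proof.
move=> hu.
have A : forall t (w : 'I_n), (w : nat) = x + t -> x + t < y -> porbit s w = porbit s u.
  elim => [|t IH] w hw hlt.
    by congr porbit; apply: val_inj; rewrite /= hw hu addn0.
  have hl : x + t < n by lia.
  rewrite -(porbit_step (a := Ordinal hl) (b := w)); last by rewrite famE /= hw /gf; ifs; lia.
  by apply: IH => //=; lia.
have B : forall t (w : 'I_n), (w : nat) = y + t -> y + t < z -> porbit s w = porbit s u.
  elim => [|t IH] w hw hlt.
    by rewrite (porbit_step (b := u)) // famE hw hu /gf; ifs; lia.
  have hl : y + t < n by lia.
  rewrite (porbit_step (b := Ordinal hl)); last by rewrite famE /= hw /gf; ifs; lia.
  by apply: IH => //=; lia.
move=> j; rewrite fam_fixed negbK => /andP [h1 h2].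
case: (ltnP j y) => hj.
  by apply: (A (j - x)); lia.
by apply: (B (j - y)); lia.
Qed.

Lemma fam_cyc : cyc s = n - (z - x) + 1.
Proof.
have hx : x < n by lia.
pose u := Ordinal hx.
have hu : s u != u by rewrite fam_fixed /=; apply/negP => /negP; apply; lia.
have l := cyc_lower hu.
have r := cyc_upper (fam_orbits (u := u) erefl).
have cF : #|[set i : 'I_n | s i == i]| = n - (z - x).
  have := cardsC [set i : 'I_n | s i == i]; rewrite card_ord.
  have -> : ~: [set i : 'I_n | s i == i] = [set i : 'I_n | x <= i < z].
    by apply/setP => i; rewrite !inE fam_fixed negbK.
  rewrite card_interval //; lia.
rewrite /cyc; move: l r; rewrite cF addn1 => l r; apply/eqP; rewrite eqn_leq; apply/andP; split; [exact: r | exact: l].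
Qed.

Lemma fam_D : Dstat s = 2 * (z - x - 1).
Proof.
rewrite /Dstat.
under eq_bigr do rewrite famE.
rewrite -(big_mkord xpredT (fun i => maxn (gf x y z i) i - minn (gf x y z i) i)).
rewrite (eq_big_nat _ _ (F2 := fun i =>
   (if x <= i < y.-1 then 1 else 0) + (if y.-1 <= i < y then z - y else 0) +
   (if y <= i < y.+1 then y - x else 0) + (if y.+1 <= i < z then 1 else 0))); last first.
  by move=> i _; rewrite /gf; ifs; lia.
rewrite !big_split /= !sum_ind; try lia.
rewrite (_ : y - y.-1 = 1); last lia.
rewrite (_ : y.+1 - y = 1); last lia.
lia.
Qed.

Lemma fam_I : Istat s = z - x - 1.
Proof. have := D_blocks fam_blocks; rewrite fam_D; lia. Qed.

Lemma fam_shallow : shallow s.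
Proof.
rewrite /shallow /Tstat fam_I fam_D fam_cyc; apply/eqP; lia.
Qed.

Lemma fam_neq1 : s != 1%g.
Proof.
have hx : x < n by lia.
apply/eqP => e; have := fam_fixed (Ordinal hx); rewrite e perm1 eqxx /=; lia.
Qed.
End Fam.

Lemma sum_card (T : finType) (P Q : pred T) :
  \sum_(i | P i) (Q i : nat) = #|[set i | P i && Q i]|.
Proof.
rewrite card_set_sum big_mkcond /=; apply: eq_bigr => i _; by case: (P i).
Qed.

Lemma blocks1 n k : blocks (1%g : 'S_n) k.
Proof. by split => i j h _; rewrite !perm1. Qed.

Lemma gap n (s : 'S_n) k : blocks s k -> forall t (i j : 'I_n),
  (j : nat) = i + t -> j < k -> s i + t <= s j.
Proof.
move=> [hb _]; elim => [|t IH] i j hj hk.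
  by rewrite addn0 (_ : i = j) //; apply: val_inj; rewrite /= hj addn0.
have hl : i + t < n by have := ltn_ord j; lia.
have := IH i (Ordinal hl) erefl ltac:(rewrite /=; lia).
have := hb (Ordinal hl) j ltac:(rewrite /=; lia) hk.
rewrite /=; lia.
Qed.

Section Char.
Variable n : nat.
Variable s : 'S_n.
Hypothesis hsh : shallow s.
Hypothesis hgr : grassmannian s.
Hypothesis hne : s != 1%g.

Lemma char : exists x y z, [/\ x < y, y < z, z <= n & s = fam n x y z].
Proof.
have [d hd] : exists d, d \in descents s.
  case: (set_0Vmem (descents s)) => [h|[d hd]]; last by exists d.
  exfalso; move/eqP: hne; apply.
  exact: (blocks_uniq (blocks_nodesc h) (blocks1 n 0)).
have honly : forall p : 'I_n, p \in descents s -> (p : nat) = d.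
  move=> p hp; apply/eqP; apply/negP => /negP hpd.
  have : #|[set p; d]| <= 1.
    apply: leq_trans hgr; apply: subset_leq_card; apply/subsetP => q.
    by move=> /set2P [-> | ->].
  rewrite cards2; case: eqP => // e; by move: hpd; rewrite e eqxx.
have hb := blocks_desc honly.
set k := (d : nat).+1 in hb.
move: (hd); rewrite inE => /existsP [q /andP [/eqP hq0 hsq]].
have hq : (q : nat) = d.+1 by exact: hq0.
have hL : forall i : 'I_n, i < k -> (s i : nat) = i + Rs s i.
  move=> i hi; have := key s i; rewrite (blocksL hb hi); lia.
have hR : forall i : 'I_n, k <= i -> s i + Ls s i = i.
  move=> i hi; have := key s i; rewrite (blocksR hb hi); lia.
have [u hu] : exists u, s u != u.
  case: (pickP (fun u => s u != u)) => [u hu|h]; first by exists u.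
  exfalso; move/eqP: hne; apply; apply/permP => i; rewrite perm1.
  by have := h i; move/negbFE/eqP.
have hT := cyc_lower hu.
have hFm := cardsC [set i : 'I_n | s i == i]; rewrite card_ord in hFm.
have hC : ~: [set i : 'I_n | s i == i] = [set i : 'I_n | s i != i].
  by apply/setP => i; rewrite !inE.
rewrite hC in hFm.
set m := #|[set i : 'I_n | s i != i]| in hFm.
have hIT : Istat s = Tstat s.
  have := D_blocks hb; move: hsh; rewrite /shallow => /eqP; lia.
have hIm : Istat s + 1 <= m.
  have hT' : #|[set x | s x == x]| < cyc s by exact: hT.
  have hc : cyc s <= n.
    by rewrite /cyc /porbits; apply: leq_trans (leq_imset_card _ _) _; rewrite card_ord.
  rewrite hIT /Tstat; move: hT' hFm hc; set F := #|[set x | s x == x]|; lia.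
have hm : m <= #|[set i : 'I_n | (i < d) && (s i != i)]| + 1 + Rs s d.
  have e := cardsID [set i : 'I_n | i < d] [set i : 'I_n | s i != i].
  have e1 : [set i : 'I_n | s i != i] :&: [set i : 'I_n | i < d] =
            [set i : 'I_n | (i < d) && (s i != i)].
    by apply/setP => i; rewrite !inE andbC.
  have sub : [set i : 'I_n | s i != i] :\: [set i : 'I_n | i < d] \subset
             d |: [set j : 'I_n | (d < j) && (s j < s d)].
    apply/subsetP => j; rewrite !inE => /andP [hj1 hj2].
    case: (eqVneq j d) => //= hjd.
    have hkj : k <= j by move: hjd; rewrite -(inj_eq val_inj) /= /k; lia.
    have e0 := hR j hkj.
    have hL1 : 0 < Ls s j.
      rewrite lt0n; apply/negP => /eqP h0.
      by move/eqP: hj2; apply; apply: val_inj; move: e0; rewrite h0 /=; lia.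
    move: hL1; rewrite /Ls card_gt0 => /set0Pn [i]; rewrite inE => /andP [hij hsij].
    apply/andP; split; first lia.
    case: (ltnP i k) => hik.
      case: (eqVneq i d) => [eid|hid]; first by rewrite -eid.
      have hid' : i < d by move: hid; rewrite -(inj_eq val_inj) /=; lia.
      have := (proj1 hb) i d hid' ltac:(rewrite /k; lia); lia.
    have := (proj2 hb) i j hij hik; lia.
  have := subset_leq_card sub; rewrite cardsU1 /Rs.
  rewrite e1 in e; rewrite /m -e; case: (_ \notin _) => /=; lia.
have hsumR : \sum_(i : 'I_n | i < d) Rs s i + Rs s d <= Istat s.
  rewrite I_sumR [X in _ <= X](bigID (fun i : 'I_n => i < d)) /=.
  rewrite [X in _ <= _ + X](bigD1 d) /=; last by rewrite ltnn.
  lia.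
have hA1 : #|[set i : 'I_n | (i < d) && (s i != i)]| = \sum_(i : 'I_n | i < d) (s i != i : nat).
  by rewrite sum_card.
have hR1 : forall i : 'I_n, i < d -> Rs s i <= 1.
  move=> i0 hi0; rewrite leqNgt; apply/negP => h2.
  have hle : forall i : 'I_n, i < d -> (s i != i : nat) <= Rs s i.
    move=> i hi; have := hL i ltac:(rewrite /k; lia).
    case: (eqVneq (s i) i) => [//|h] /= e.
    rewrite lt0n; apply/negP => /eqP h0; move: h; rewrite -(inj_eq val_inj) /= e h0 addn0 eqxx.
    done.
  have : \sum_(i : 'I_n | i < d) (s i != i : nat) + 1 <= \sum_(i : 'I_n | i < d) Rs s i.
    rewrite (bigD1 i0) //= [X in _ <= X](bigD1 i0) //=.
    have : \sum_(i : 'I_n | (i < d) && (i != i0)) (s i != i : nat) <=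
           \sum_(i : 'I_n | (i < d) && (i != i0)) Rs s i.
      by apply: leq_sum => i /andP [hi _]; exact: hle.
    have : (s i0 != i0 : nat) <= 1 by case: (_ != _).
    move=> hb1 hAB; rewrite addnAC; apply: leq_add => //; move: hb1 h2; case: (_ != _) => /=; lia.
  lia.
clear hA1 hsumR hm hIm hIT hFm hC hT hu m.
have hPd : (d == d) || (s d != d) by rewrite eqxx.
case: (@arg_minnP _ d (fun i : 'I_n => (i == d) || (s i != i)) (fun i : 'I_n => (i : nat)) hPd) => x hPx hxmin.
have hxd : x <= d by have := hxmin d hPd.
have hfix : forall i : 'I_n, i < x -> s i = i.
  move=> i hi; apply/eqP; apply/negP => /negP h.
  have := hxmin i; rewrite h orbT => /(_ isT); lia.
have hsd : (d : nat) < s d.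
  have h1 : 0 < Rs s d.
    rewrite /Rs card_gt0; apply/set0Pn; exists q; rewrite inE hsq andbT; lia.
  have := hL d ltac:(rewrite /k; lia); lia.
have hmid : forall i : 'I_n, x <= i -> i < d -> (s i : nat) = i.+1.
  move=> i h1 h2.
  have hx1 : (s x : nat) = x.+1.
    have hxd' : x != d by rewrite -(inj_eq val_inj) /=; lia.
    move: hPx; rewrite (negbTE hxd') /= => hsx.
    have := hR1 x ltac:(lia); have := hL x ltac:(rewrite /k; lia).
    move: hsx; rewrite -(inj_eq val_inj) /=; lia.
  have := @gap n s k hb (i - x) x i ltac:(lia) ltac:(rewrite /k; lia).
  have := hR1 i h2; have := hL i ltac:(rewrite /k; lia); lia.
exists x, k, (s d).+1; split.
- by rewrite /k; clear -hxd; lia.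
- by rewrite /k; clear -hsd; lia.
- exact: ltn_ord.
have hxy : x < k by rewrite /k; clear -hxd; lia.
have hyz : k < (s d).+1 by rewrite /k; clear -hsd; lia.
have hzn : (s d).+1 <= n by exact: ltn_ord.
apply: (blocks_uniq hb (fam_blocks hxy hyz hzn)).
move=> i hi; apply: val_inj; rewrite /= (famE hxy hyz hzn).
rewrite /gf.
case: (ltnP i x) => h1.
  by rewrite (hfix i h1); move: h1; clear; ifs; lia.
case: (ltnP i d) => h2.
  rewrite hmid //; move: h1 h2 hi; rewrite /k; clear; ifs; lia.
have -> : i = d by apply: val_inj; rewrite /=; move: hi h2; rewrite /k; clear; lia.
move: hsd hxd; clear; ifs; lia.
Qed.
End Char.

Lemma fam_inj n x y z x' y' z' :
  x < y -> y < z -> z <= n -> x' < y' -> y' < z' -> z' <= n ->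
  fam n x y z = fam n x' y' z' -> [/\ x = x', y = y' & z = z'].
Proof.
move=> h1 h2 h3 h1' h2' h3' e.
have H : forall i, i < n -> gf x y z i = gf x' y' z' i.
  move=> i hi; have := congr1 (fun s : 'S_n => (s (Ordinal hi) : nat)) e.
  by rewrite /= (famE h1 h2 h3) (famE h1' h2' h3').
have ex : x = x'.
  case: (ltngtP x x') => // hx.
    have := H x ltac:(lia); move: hx h1 h2 h3 h1' h2' h3'; clear.
    rewrite /gf; ifs; lia.
  have := H x' ltac:(lia); move: hx h1 h2 h3 h1' h2' h3'; clear.
  rewrite /gf; ifs; lia.
have ez : z = z'.
  case: (ltngtP z z') => // hz.
    have := H z'.-1 ltac:(lia); move: hz h1 h2 h3 h1' h2' h3'; clear.
    rewrite /gf; ifs; lia.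
  have := H z.-1 ltac:(lia); move: hz h1 h2 h3 h1' h2' h3'; clear.
  rewrite /gf; ifs; lia.
subst x' z'; split => //.
case: (ltngtP y y') => // hy.
  have := H y ltac:(lia); move: hy h1 h2 h3 h1' h2' h3'; clear.
  rewrite /gf; ifs; lia.
have := H y' ltac:(lia); move: hy h1 h2 h3 h1' h2' h3'; clear.
rewrite /gf; ifs; lia.
Qed.

Lemma id_shallow n : shallow (1%g : 'S_n) && grassmannian (1%g : 'S_n).
Proof.
have hd : descents (1%g : 'S_n) = set0.
  apply/setP => i; rewrite !inE; apply/negbTE/existsP => [[j /andP [/eqP hj]]].
  rewrite !perm1; have hj' : (j : nat) = i.+1 by exact: hj.
  lia.
apply/andP; split; last by rewrite /grassmannian hd cards0.
have hI : Istat (1%g : 'S_n) = 0.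
  apply/eqP; rewrite cards_eq0; apply/eqP/setP => p; rewrite !inE !perm1.
  apply/negbTE/negP => /andP [a b]; lia.
have hD : Dstat (1%g : 'S_n) = 0.
  by rewrite /Dstat big1 // => i _; rewrite perm1 maxnn minnn subnn.
have hc : cyc (1%g : 'S_n) = n.
  have l := cyc_lower0 (1%g : 'S_n).
  have e : [set x : 'I_n | (1%g : 'S_n) x == x] = setT.
    by apply/setP => i; rewrite !inE perm1 eqxx.
  rewrite e cardsT card_ord in l.
  have hc : cyc (1%g : 'S_n) <= n.
    by rewrite /cyc /porbits; apply: leq_trans (leq_imset_card _ _) _; rewrite card_ord.
  apply/eqP; rewrite eqn_leq hc; exact: l.
by rewrite /shallow /Tstat hI hD hc subnn.
Qed.

Definition Pt n (t : 3.-tuple 'I_n.+1) : 'S_n :=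
  fam n (nth 0 (map val t) 0) (nth 0 (map val t) 1) (nth 0 (map val t) 2).

Lemma tupleS n (t : 3.-tuple 'I_n.+1) : sorted ltn (map val t) ->
  exists a b c : 'I_n.+1, [/\ t = [tuple a; b; c], (a : nat) < b, (b : nat) < c & (c : nat) <= n].
Proof.
case: t => [[|a [|b [|c [|? ?]]]] //= ht] hs.
exists a, b, c; split.
- by apply: val_inj.
- by move: hs => /and3P [].
- by move: hs => /and3P [].
- by rewrite -ltnS.
Qed.

Theorem corollary6p4 (n : nat) : 2 <= n ->
  #|[set s : 'S_n | shallow s && grassmannian s]| = 'C(n.+1, 3) + 1.
Proof.
move=> hn.
pose S3 := [set t : 3.-tuple 'I_n.+1 | sorted ltn (map val t)].
have hinj : {in S3 &, injective (@Pt n)}.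
  move=> t1 t2; rewrite !inE => /tupleS [a [b [c [-> h1 h2 h3]]]].
  move=> /tupleS [a' [b' [c' [-> h1' h2' h3']]]].
  rewrite /Pt /= => e.
  have [ea eb ec] := fam_inj h1 h2 h3 h1' h2' h3' e.
  apply: val_inj => /=.
  by rewrite (val_inj ea) (val_inj eb) (val_inj ec).
have hnot : (1%g : 'S_n) \notin (@Pt n) @: S3.
  apply/imsetP => [[t]]; rewrite inE => /tupleS [a [b [c [-> h1 h2 h3]]]].
  rewrite /Pt /= => e.
  by have := fam_neq1 h1 h2 h3; rewrite -e eqxx.
have eq : [set s : 'S_n | shallow s && grassmannian s] = 1%g |: ((@Pt n) @: S3).
  apply/setP => s; rewrite !inE.
  apply/idP/idP.
    move=> /andP [hs hg].
    case: (eqVneq s 1%g) => [-> //|hne]; rewrite orbC; apply/orP; left.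
    have [x [y [z [hxy hyz hzn ->]]]] := char hs hg hne.
    apply/imsetP; exists [tuple (inord x : 'I_n.+1); inord y; inord z].
      rewrite inE /= !inordK; try lia.
    rewrite /Pt /=.
    have e1 : val (inord x : 'I_n.+1) = x by rewrite /= inordK; lia.
    have e2 : val (inord y : 'I_n.+1) = y by rewrite /= inordK; lia.
    have e3 : val (inord z : 'I_n.+1) = z by rewrite /= inordK; lia.
    by rewrite e1 e2 e3.
  move=> /orP [/eqP -> | /imsetP [t]]; first exact: id_shallow.
  rewrite inE => /tupleS [a [b [c [-> h1 h2 h3]]]] ->.
  by rewrite /Pt /= (fam_shallow h1 h2 h3) (fam_grass h1 h2 h3).
rewrite eq cardsU1 hnot (card_in_imset hinj) card_ltn_sorted_tuples.
by rewrite addnC.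
Qed.
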